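(* Let $R$ be a reduced commutative ring, $a\in R$, and $d\ge -1$ an integer. Then $\mathrm{dimv}\,R\le d$ if and only if $\mathrm{dimv}\,R_{\{a\}}\le d$.
   Context: All rings are commutative with $1$. For a reduced ring $A$ and $a\in A$, write $a^\perp=\mathrm{Ann}_A(a)$ and $(a^\perp)^\perp=\mathrm{Ann}_A(\mathrm{Ann}_A(a))$, and set $A_{\{a\}}:=A/a^\perp\times A/(a^\perp)^\perp$ (the canonical map $A\to A_{\{a\}}$ is injective and $A_{\{a\}}$ is reduced). $\mathrm{dimv}$: a graded rational monomial order on $\mathbb Z^{k}$ is given by a matrix $M\in\mathrm{Mat}_k(\mathbb N)$ which is invertible in $\mathrm{Mat}_k(\mathbb Q)$ and whose first row has all entries $>0$, by setting $e<_M f \iff Me<_{\mathrm{lex}}Mf$ (lexicographic order). For a nonzero polynomial $P\in A[X_0,\dots,X_n]$ its trailing coefficient (for $<_M$) is the coefficient of the $<_M$-smallest monomial occurring in $P$. For $n\ge 0$, $\mathrm{dimv}\,A\le n$ means: for a graded rational monomial order $<_M$ on $\mathbb Z^{n+1}$ and for all $x_0,\dots,x_n\in A$ there is $P\in A[X_0,\dots,X_n]$ with $P(x_0,\dots,x_n)=0$ whose trailing coefficient for $<_M$ equals $1$ (this condition does not depend on the choice of $M$). $\mathrm{dimv}\,A\le -1$ means that $A$ is trivial. *)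

(* Defs.v *)
From HB Require Import structures.
From mathcomp Require Import all_boot all_order all_algebra.
From mathcomp Require Import generic_quotient.
From mathcomp Require Import boolp.
Set Implicit Arguments. Unset Strict Implicit. Unset Printing Implicit Defensive.
Import Order.TTheory GRing.Theory Num.Theory.
Local Open Scope ring_scope.
Local Open Scope quotient_scope.

Definition reduced (A : comPzRingType) : Prop :=
  forall (x : A) (k : nat), x ^+ k = 0 -> x = 0.

(** Possibly-trivial quotients are allowed (A / A is the zero ring), hence we
    work with comPzRingType (rings where 0 = 1 is allowed). *)
Record ideal (A : comPzRingType) := Ideal {
  ideal_mem :> A -> Prop;
  ideal_0 : ideal_mem 0;
  ideal_D : forall x y, ideal_mem x -> ideal_mem y -> ideal_mem (x + y);
  ideal_M : forall r x, ideal_mem x -> ideal_mem (r * x) }.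

Section Quotient.
Variables (A : comPzRingType) (I : ideal A).

Lemma ideal_N x : I x -> I (- x).
Proof. by move=> Ix; rewrite -mulN1r; apply: ideal_M. Qed.

Definition qrel (x y : A) : bool := `[< I (x - y) >].

Lemma qrel_refl : reflexive qrel.
Proof. by move=> x; apply/asboolP; rewrite subrr; apply: ideal_0. Qed.
Lemma qrel_sym : symmetric qrel.
Proof.
move=> x y; apply/asboolP/asboolP => /ideal_N; by rewrite opprB.
Qed.
Lemma qrel_trans : transitive qrel.
Proof.
move=> y x z /asboolP Hxy /asboolP Hyz; apply/asboolP.
by have := ideal_D Hxy Hyz; rewrite addrA addrNK.
Qed.

Canonical qrel_equiv := EquivRel qrel qrel_refl qrel_sym qrel_trans.

Definition quot := {eq_quot qrel}.
HB.instance Definition _ := Choice.on quot.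
HB.instance Definition _ := Quotient.on quot.
HB.instance Definition _ := EqQuotient.on quot.

Local Notation pi := (\pi_quot).

Lemma piP (x y : A) : (pi x = pi y) <-> I (x - y).
Proof.
split; first by move/eqmodP/asboolP.
by move=> H; apply/eqmodP/asboolP.
Qed.

Lemma reprP (x : A) : I (repr (pi x) - x).
Proof. by apply/piP; rewrite reprK. Qed.

Definition qzero : quot := pi 0.
Definition qone : quot := pi 1.
Definition qadd (u v : quot) : quot := pi (repr u + repr v).
Definition qopp (u : quot) : quot := pi (- repr u).
Definition qmul (u v : quot) : quot := pi (repr u * repr v).

Lemma qaddE x y : qadd (pi x) (pi y) = pi (x + y).
Proof.
apply/piP; rewrite /qadd.
by rewrite opprD addrACA; apply: ideal_D; apply: reprP.
Qed.
Lemma qoppE x : qopp (pi x) = pi (- x).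
Proof. apply/piP; have := ideal_N (reprP x); by rewrite opprB addrC opprK. Qed.
Lemma qmulE x y : qmul (pi x) (pi y) = pi (x * y).
Proof.
apply/piP; rewrite /qmul.
set a := repr (pi x); set b := repr (pi y).
have -> : a * b - x * y = b * (a - x) + x * (b - y).
  by rewrite !mulrBr [b * a]mulrC [b * x]mulrC addrA subrK.
by apply: ideal_D; apply: ideal_M; apply: reprP.
Qed.

Lemma qaddA : associative qadd.
Proof.
move=> u v w; elim/quotW: u => x; elim/quotW: v => y; elim/quotW: w => z.
by rewrite [qadd (pi y) _]qaddE [qadd (pi x) (pi y)]qaddE !qaddE addrA.
Qed.
Lemma qaddC : commutative qadd.
Proof. by move=> u v; elim/quotW: u => x; elim/quotW: v => y; rewrite !qaddE addrC. Qed.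
Lemma qadd0 : left_id qzero qadd.
Proof. by move=> u; elim/quotW: u => x; rewrite /qzero qaddE add0r. Qed.
Lemma qaddN : left_inverse qzero qopp qadd.
Proof. by move=> u; elim/quotW: u => x; rewrite qoppE qaddE addNr. Qed.

HB.instance Definition _ := GRing.isZmodule.Build quot qaddA qaddC qadd0 qaddN.

Lemma qmulA : associative qmul.
Proof.
move=> u v w; elim/quotW: u => x; elim/quotW: v => y; elim/quotW: w => z.
by rewrite [qmul (pi y) _]qmulE [qmul (pi x) (pi y)]qmulE !qmulE mulrA.
Qed.
Lemma qmulC : commutative qmul.
Proof. by move=> u v; elim/quotW: u => x; elim/quotW: v => y; rewrite !qmulE mulrC. Qed.
Lemma qmul1 : left_id qone qmul.
Proof. by move=> u; elim/quotW: u => x; rewrite /qone qmulE mul1r. Qed.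
Lemma qmulDl : left_distributive qmul (@GRing.add quot).
Proof.
move=> u v; elim/quotW: u => x; elim/quotW: v => y; elim/quotW=> z.
rewrite [qmul (pi x) _]qmulE [qmul (pi y) _]qmulE.
have -> : (pi x + pi y : quot) = pi (x + y) by apply: qaddE.
by rewrite qmulE mulrDl -qaddE.
Qed.

HB.instance Definition _ :=
  GRing.Zmodule_isComPzRing.Build quot qmulA qmulC qmul1 qmulDl.

End Quotient.

Section Annihilators.
Variables (A : comPzRingType) (a : A).

Definition ann_pred (x : A) : Prop := x * a = 0.
Definition ann2_pred (x : A) : Prop := forall y, ann_pred y -> x * y = 0.

Lemma ann_0 : ann_pred 0. Proof. by rewrite /ann_pred mul0r. Qed.
Lemma ann_D x y : ann_pred x -> ann_pred y -> ann_pred (x + y).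
Proof. by rewrite /ann_pred mulrDl => -> ->; rewrite addr0. Qed.
Lemma ann_M r x : ann_pred x -> ann_pred (r * x).
Proof. by rewrite /ann_pred -mulrA => ->; rewrite mulr0. Qed.

Lemma ann2_0 : ann2_pred 0. Proof. by move=> y _; rewrite mul0r. Qed.
Lemma ann2_D x y : ann2_pred x -> ann2_pred y -> ann2_pred (x + y).
Proof. by move=> Hx Hy z Hz; rewrite mulrDl Hx // Hy // addr0. Qed.
Lemma ann2_M r x : ann2_pred x -> ann2_pred (r * x).
Proof. by move=> Hx z Hz; rewrite -mulrA Hx // mulr0. Qed.

Definition ann : ideal A := Ideal ann_0 ann_D ann_M.
Definition ann2 : ideal A := Ideal ann2_0 ann2_D ann2_M.

End Annihilators.

(** A_{a} := A / a^perp  x  A / (a^perp)^perp *)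
Definition ring_split (A : comPzRingType) (a : A) : comPzRingType :=
  (quot (ann a) * quot (ann2 a))%type.

(** * Graded rational monomial orders on Z^k (here on exponent vectors in N^k) *)
Definition expvec (k : nat) := {ffun 'I_k -> nat}.

Definition mxact (k : nat) (M : 'M[nat]_k) (e : expvec k) (i : 'I_k) : nat :=
  (\sum_(j < k) M i j * e j)%N.

Definition ltM (k : nat) (M : 'M[nat]_k) (e f : expvec k) : Prop :=
  exists i : 'I_k, (forall j : 'I_k, (j < i)%N -> mxact M e j = mxact M f j)
                   /\ (mxact M e i < mxact M f i)%N.

Definition graded_rational (k : nat) (M : 'M[nat]_k.+1) : Prop :=
  map_mx (fun m : nat => m%:R : rat) M \in unitmx
  /\ forall j : 'I_k.+1, (0 < M ord0 j)%N.

(** A polynomial of A[X_0..X_{k-1}] is given by the (duplicate-free) list [s]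
    of the monomials occurring in it and their coefficients [c]. *)
Definition peval (A : comPzRingType) (k : nat) (s : seq (expvec k))
  (c : expvec k -> A) (x : 'I_k -> A) : A :=
  \sum_(e <- s) c e * \prod_(i < k) x i ^+ e i.

Definition trailing_coef_one (A : comPzRingType) (k : nat) (M : 'M[nat]_k)
  (s : seq (expvec k)) (c : expvec k -> A) : Prop :=
  exists2 e0, e0 \in s &
    c e0 = 1 /\ forall e, e \in s -> e != e0 -> ltM M e0 e.

Definition dimv_le_nat (A : comPzRingType) (n : nat) : Prop :=
  forall M : 'M[nat]_n.+1, graded_rational M ->
  forall x : 'I_n.+1 -> A,
  exists (s : seq (expvec n.+1)) (c : expvec n.+1 -> A),
    [/\ uniq s, peval s c x = 0 & trailing_coef_one M s c].

Definition dimv_le (A : comPzRingType) (d : int) : Prop :=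
  match d with
  | Posz n => dimv_le_nat A n
  | Negz _ => (1 : A) = 0
  end.

(* Main.v *)
Require Import Defs.
From HB Require Import structures.
From mathcomp Require Import all_boot all_order all_algebra generic_quotient.
Set Implicit Arguments. Unset Strict Implicit. Unset Printing Implicit Defensive.
Import GRing.Theory.
Local Open Scope ring_scope.
Local Open Scope quotient_scope.

Section PiMorph.
Variables (A : comPzRingType) (I : ideal A).
Definition piq (x : A) : quot I := \pi_(quot I) x.
Lemma piq_zmod : zmod_morphism piq.
Proof.
move=> x y; rewrite /piq.
change (\pi_(quot I) (x - y) = qadd (\pi_(quot I) x) (qopp (\pi_(quot I) y))).
by rewrite qoppE qaddE.
Qed.
Lemma piq_mon : monoid_morphism piq.
Proof.
split=> // x y; rewrite /piq.
change (\pi_(quot I) (x * y) = qmul (\pi_(quot I) x) (\pi_(quot I) y)).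
by rewrite qmulE.
Qed.
HB.instance Definition _ := GRing.isZmodMorphism.Build A (quot I) piq piq_zmod.
HB.instance Definition _ := GRing.isMonoidMorphism.Build A (quot I) piq piq_mon.
Lemma piqK (u : quot I) : piq (repr u) = u.
Proof. exact: reprK. Qed.
End PiMorph.

Section Order.
Variables (k : nat) (M : 'M[nat]_k).

Definition addv (e f : expvec k) : expvec k := [ffun i => (e i + f i)%N].

Lemma mxact_add e f i : mxact M (addv e f) i = (mxact M e i + mxact M f i)%N.
Proof. rewrite /mxact -big_split /=; apply: eq_bigr => j _; by rewrite ffunE mulnDr. Qed.

Lemma ltM_irr e : ~ ltM M e e.
Proof. by case=> i [_]; rewrite ltnn. Qed.

Lemma ltM_trans e f g : ltM M e f -> ltM M f g -> ltM M e g.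
Proof.
case=> i [Hi1 Hi2] [j [Hj1 Hj2]].
case: (ltngtP i j) => [ij|ji|ij].
- exists i; split; last by rewrite -(Hj1 _ ij).
  move=> l li; rewrite Hi1 // Hj1 //; exact: ltn_trans li ij.
- exists j; split; last by rewrite (Hi1 _ ji).
  move=> l lj; rewrite Hi1 ?Hj1 //; exact: ltn_trans lj ji.
- have ej : j = i by apply: val_inj.
  subst j; exists i; split; last exact: ltn_trans Hi2 Hj2.
  by move=> l li; rewrite Hi1 ?Hj1.
Qed.

Lemma ltM_addr g e f : ltM M e f -> ltM M (addv e g) (addv f g).
Proof.
case=> i [H1 H2]; exists i; split.
  by move=> l li; rewrite !mxact_add H1.
by rewrite !mxact_add ltn_add2r.
Qed.

Lemma addvC e f : addv e f = addv f e.
Proof. by apply/ffunP => i; rewrite !ffunE addnC. Qed.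

Lemma ltM_addl g e f : ltM M e f -> ltM M (addv g e) (addv g f).
Proof. by rewrite !(addvC g); exact: ltM_addr. Qed.

Variable (A : comPzRingType) (x : 'I_k -> A).

Lemma prod_add e f :
  \prod_(i < k) x i ^+ addv e f i = (\prod_(i < k) x i ^+ e i) * \prod_(i < k) x i ^+ f i.
Proof. by rewrite -big_split; apply: eq_bigr => i _; rewrite ffunE exprD. Qed.

Lemma prod_poly s1 c1 s2 c2 : uniq s1 -> uniq s2 ->
  trailing_coef_one M s1 c1 -> trailing_coef_one M s2 c2 ->
  exists s c, [/\ uniq s, peval s c x = peval s1 c1 x * peval s2 c2 x
                & trailing_coef_one M s c].
Proof.
move=> u1 u2 [e0 e0s [c1e0 H1]] [f0 f0s [c2f0 H2]].
pose s := undup [seq addv e f | e <- s1, f <- s2].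
pose c := fun g => \sum_(e <- s1) \sum_(f <- s2)
                     (if addv e f == g then c1 e * c2 f else 0).
have key : forall e f, e \in s1 -> f \in s2 -> (e != e0) || (f != f0) ->
    ltM M (addv e0 f0) (addv e f).
  move=> e f es fs; case: (eqVneq e e0) => [->|ne] /=.
    move=> nf; apply: ltM_addl; exact: H2.
  move=> _; case: (eqVneq f f0) => [->|nf].
    apply: ltM_addr; exact: H1.
  apply: (ltM_trans (ltM_addr f0 (H1 e es ne))); apply: ltM_addl; exact: H2.
exists s, c; split.
- exact: undup_uniq.
- rewrite /peval big_distrl /=.
  transitivity (\sum_(e <- s1) \sum_(f <- s2)
        c1 e * c2 f * \prod_(i < k) x i ^+ addv e f i).
  + rewrite /c.
    under eq_bigr => g _ do rewrite big_distrl /=.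
    under eq_bigr => g _ do under eq_bigr => e _ do rewrite big_distrl /=.
    rewrite exchange_big /=; apply: eq_big_seq => e es.
    rewrite exchange_big /=; apply: eq_big_seq => f fs.
    rewrite (bigD1_seq (addv e f)) ?undup_uniq //=; last first.
      by rewrite mem_undup allpairs_f.
    rewrite eqxx [X in _ + X]big1 ?addr0 // => g; rewrite eq_sym => /negbTE ->.
    by rewrite mul0r.
  + apply: eq_bigr => e es; rewrite big_distrr /=; apply: eq_bigr => f fs.
    by rewrite prod_add mulrACA.
- exists (addv e0 f0); first by rewrite mem_undup allpairs_f.
  split.
  + rewrite /c (bigD1_seq e0) //= [X in _ + X]big1_seq ?addr0.
      rewrite (bigD1_seq f0) //= eqxx c1e0 c2f0 mulr1 [X in _ + X]big1_seq ?addr0 //.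
      move=> f /andP [nf fs]; case: eqP => // E; exfalso.
      have := key e0 f e0s fs; rewrite nf orbT E => /(_ isT); exact: ltM_irr.
    move=> e /andP [ne es]; rewrite big1_seq // => f /andP [_ fs].
    case: eqP => // E; exfalso.
    have := key e f es fs; rewrite ne E => /(_ isT); exact: ltM_irr.
  + move=> g; rewrite mem_undup => /allpairsP [[e f] [/= es fs ->]] ne.
    apply: key => //; rewrite -negb_and; apply: contra ne.
    by case/andP => /eqP -> /eqP ->.
Qed.

End Order.

Lemma peval_morph (A B : comPzRingType) (phi : {rmorphism A -> B}) k
  (s : seq (expvec k)) c x : phi (peval s c x) = peval s (phi \o c) (phi \o x).
Proof.
rewrite /peval rmorph_sum; apply: eq_bigr => e _; rewrite rmorphM rmorph_prod /=.
by congr (_ * _); apply: eq_bigr => i _; rewrite rmorphXn.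
Qed.

Lemma peval_ext (A : comPzRingType) k (s : seq (expvec k)) (c c' : expvec k -> A) (x x' : 'I_k -> A) :
  (forall e, c e = c' e) -> (forall i, x i = x' i) -> peval s c x = peval s c' x'.
Proof.
move=> Hc Hx; rewrite /peval; apply: eq_bigr => e _; rewrite Hc.
by congr (_ * _); apply: eq_bigr => i _; rewrite Hx.
Qed.

Lemma trail_morph (A B : comPzRingType) (phi : {rmorphism A -> B}) k
  (M : 'M[nat]_k) s c : trailing_coef_one M s c -> trailing_coef_one M s (phi \o c).
Proof. by case=> e0 H [H1 H2]; exists e0 => //; split => //=; rewrite H1 rmorph1. Qed.

Lemma dimv_quot (A : comPzRingType) (I : ideal A) n :
  dimv_le_nat A n -> dimv_le_nat (quot I) n.
Proof.
move=> H M HM x; have [s [c [us P0 tr]]] := H M HM (fun i => repr (x i)).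
exists s, (piq I \o c); split => //; last exact: trail_morph.
transitivity (peval s (piq I \o c) (piq I \o (fun i => repr (x i)))).
  by apply: peval_ext => // i /=; rewrite piqK.
by rewrite -peval_morph P0 rmorph0.
Qed.

Lemma dimv_prod (A B : comPzRingType) n :
  dimv_le_nat A n -> dimv_le_nat B n -> dimv_le_nat (A * B)%type n.
Proof.
move=> HA HB M HM x.
have [s1 [c1 [u1 P1 t1]]] := HA M HM (fst \o x).
have [s2 [c2 [u2 P2 t2]]] := HB M HM (snd \o x).
have t1' : trailing_coef_one M s1 (fun e => ((c1 e, 1) : A * B)).
  by case: t1 => e0 H [H1 H2]; exists e0 => //; split => //; rewrite H1.
have t2' : trailing_coef_one M s2 (fun e => ((1, c2 e) : A * B)).
  by case: t2 => e0 H [H1 H2]; exists e0 => //; split => //; rewrite H1.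
have [s [c [u P t]]] := prod_poly x u1 u2 t1' t2'.
exists s, c; split => //; rewrite P.
have E1 : fst (peval s1 (fun e => ((c1 e, 1) : A * B)) x) = 0.
  by rewrite (peval_morph (@fst A B)); exact: P1.
have E2 : snd (peval s2 (fun e => ((1, c2 e) : A * B)) x) = 0.
  by rewrite (peval_morph (@snd A B)); exact: P2.
move: E1 E2; case: (peval s1 _ x) => p1 p2; case: (peval s2 _ x) => q1 q2 /= -> ->.
change (((0 * q1, p2 * 0) : A * B) = 0); by rewrite mul0r mulr0.
Qed.

Lemma dimv_back (R : comPzRingType) (a : R) n :
  dimv_le_nat (ring_split a) n -> dimv_le_nat R n.
Proof.
move=> H M HM x.
have [s [c [u P [e0 e0s [c0 Hc]]]]] :=
  H M HM (fun i => ((piq (ann a) (x i), piq (ann2 a) (x i)) : ring_split a)).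
pose d1 e := if e == e0 then 1 else repr (c e).1.
pose d2 e := if e == e0 then 1 else repr (c e).2.
have t1 : trailing_coef_one M s d1 by exists e0 => //; rewrite /d1 eqxx.
have t2 : trailing_coef_one M s d2 by exists e0 => //; rewrite /d2 eqxx.
have E1 : piq (ann a) (peval s d1 x) = piq (ann a) 0.
  rewrite rmorph0 peval_morph.
  have -> : (0 : quot (ann a)) = fst (0 : ring_split a) by [].
  rewrite -P (peval_morph (@fst _ _)); apply: peval_ext => [e|i] //=.
  by rewrite /d1; case: eqP => [->|_]; rewrite ?rmorph1 ?c0 ?piqK.
have E2 : piq (ann2 a) (peval s d2 x) = piq (ann2 a) 0.
  rewrite rmorph0 peval_morph.
  have -> : (0 : quot (ann2 a)) = snd (0 : ring_split a) by [].
  rewrite -P (peval_morph (@snd _ _)); apply: peval_ext => [e|i] //=.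
  by rewrite /d2; case: eqP => [->|_]; rewrite ?rmorph1 ?c0 ?piqK.
have A1 := (Defs.piP _ _ _).1 E1; have A2 := (Defs.piP _ _ _).1 E2.
rewrite subr0 in A1; rewrite subr0 in A2.
have [s' [c' [u' P' t']]] := prod_poly x u u t1 t2.
exists s', c'; split => //; rewrite P' mulrC. exact: A2 _ A1.
Qed.

Theorem lemma3p3 (R : comPzRingType) (a : R) (d : int) :
  reduced R -> (-1 <= d)%R ->
  (dimv_le R d <-> dimv_le (ring_split a) d).
Proof.
move=> _ _; case: d => [n|n] /=.
  split; last exact: dimv_back.
  by move=> H; apply: dimv_prod; apply: dimv_quot.
split=> H.
  have h1 : (1 : quot (ann a)) = 0.
    by rewrite -(rmorph1 (piq (ann a))) -(rmorph0 (piq (ann a))) H.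
  have h2 : (1 : quot (ann2 a)) = 0.
    by rewrite -(rmorph1 (piq (ann2 a))) -(rmorph0 (piq (ann2 a))) H.
  change (((1 : quot (ann a)), (1 : quot (ann2 a))) = ((0 : quot (ann a)), (0 : quot (ann2 a)))); by rewrite h1 h2.
have h1 : piq (ann a) 1 = piq (ann a) 0.
  by rewrite rmorph1 rmorph0; exact: (congr1 fst H).
have h2 : piq (ann2 a) 1 = piq (ann2 a) 0.
  by rewrite rmorph1 rmorph0; exact: (congr1 snd H).
have A1 := (Defs.piP _ _ _).1 h1; have A2 := (Defs.piP _ _ _).1 h2.
rewrite subr0 in A1; rewrite subr0 in A2.
have a0 : a = 0 by move: A1; rewrite /= /ann_pred mul1r.
by have := A2 1; rewrite mul1r; apply; rewrite /= /ann_pred mul1r.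
Qed.
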